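(* Let $S,T$ be finite sets, $L:\{0,1\}^S\to\{0,1\}$ a monotone Boolean function, and $\psi:S\to T$ a function with $|\psi(A)|=|A|$ for every minimal one-set $A$ of $L$. Let $X=(X(i))_{i\in S}$ and $Y=(Y(j))_{j\in T}$ be i.i.d. Boolean collections with intensity $p\in[0,1]$. Assume moreover that there are $i_1,i_2\in S$ and $j_0\in T$ with $\psi^{-1}(\{j_0\})=\{i_1,i_2\}$ and $|\psi^{-1}(\{j\})|=1$ for all $j\neq j_0$. Then $$\mathbb P[L(X)=1]-\mathbb P[L(Y\circ\psi)=1]=p(1-p)\Big\{\mathbb P\big[L^X_{i_1,i_2}=f_\vee\big]-\mathbb P\big[L^X_{i_1,i_2}=f_\wedge\big]\Big\}.$$
   Context: - Monotone: $x\leq y$ pointwise implies $L(x)\leq L(y)$. - A one-set of $L$ is $A\subset S$ with $L(1_A)=1$; it is minimal if it contains no other one-set as a proper subset. - Intensity $p$ means $\mathbb P[\cdot=1]=p$; $(Y\circ\psi)(i)=Y(\psi(i))$. - For distinct $i_1,i_2\in S$ and $x\in\{0,1\}^S$, $L^x_{i_1,i_2}:\{0,1\}^2\to\{0,1\}$ is $L^x_{i_1,i_2}(z_1,z_2):=L(x')$, where $x'(i_k)=z_k$ for $k=1,2$ and $x'(i)=x(i)$ otherwise. - $f_\vee(z_1,z_2)=z_1\vee z_2$ and $f_\wedge(z_1,z_2)=z_1\wedge z_2$. *)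

(* Defs.v *)
From mathcomp Require Import all_boot all_order all_algebra.
Set Implicit Arguments. Unset Strict Implicit. Unset Printing Implicit Defensive.
Import Order.TTheory GRing.Theory Num.Theory.
Local Open Scope ring_scope.

(* Law of an i.i.d. Boolean collection (X(i))_{i in I} of intensity p:
   the probability of the configuration x is prod_i (p if x i else 1-p). *)
Definition bweight (R : ringType) (I : finType) (p : R) (x : {ffun I -> bool}) : R :=
  \prod_(i : I) (if x i then p else 1 - p).

Definition Prob (R : ringType) (I : finType) (p : R) (E : pred {ffun I -> bool}) : R :=
  \sum_(x : {ffun I -> bool} | E x) bweight p x.

Definition monotone (S : finType) (L : {ffun S -> bool} -> bool) : Prop :=
  forall x y : {ffun S -> bool}, (forall i, x i ==> y i) -> L x ==> L y.

Definition indic (S : finType) (A : {set S}) : {ffun S -> bool} := [ffun i => i \in A].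

Definition one_set (S : finType) (L : {ffun S -> bool} -> bool) (A : {set S}) : bool :=
  L (indic A).

Definition minimal_one_set (S : finType) (L : {ffun S -> bool} -> bool) (A : {set S}) : Prop :=
  one_set L A /\ forall B : {set S}, B \proper A -> ~~ one_set L B.

Definition compf (S T : finType) (y : {ffun T -> bool}) (psi : S -> T) : {ffun S -> bool} :=
  [ffun i => y (psi i)].

Definition Lres (S : finType) (L : {ffun S -> bool} -> bool) (i1 i2 : S)
  (x : {ffun S -> bool}) (z1 z2 : bool) : bool :=
  L [ffun i => if i == i1 then z1 else if i == i2 then z2 else x i].

Definition f_or (z1 z2 : bool) : bool := z1 || z2.
Definition f_and (z1 z2 : bool) : bool := z1 && z2.

Definition eqf2 (f g : bool -> bool -> bool) : bool :=
  [forall z1 : bool, forall z2 : bool, f z1 z2 == g z1 z2].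

(* Main.v *)
Require Import Defs.
From mathcomp Require Import all_boot all_order all_algebra.
From mathcomp Require Import ring lra.
Set Implicit Arguments. Unset Strict Implicit. Unset Printing Implicit Defensive.
Import Order.TTheory GRing.Theory Num.Theory.
Local Open Scope ring_scope.

Definition cw (R : ringType) (p : R) (b : bool) : R := if b then p else 1 - p.
Definition setf (S : finType) (x : {ffun S -> bool}) (i : S) (b : bool) : {ffun S -> bool} :=
  [ffun j => if j == i then b else x j].
Definition Wo (R : ringType) (S : finType) (p : R) (i : S) (x : {ffun S -> bool}) : R :=
  \prod_(j | j != i) cw p (x j).

Lemma ProbE (R : ringType) (I : finType) (p : R) (E : pred {ffun I -> bool}) :
  Prob p E = \sum_x bweight p x * (E x)%:R.
Proof.
rewrite /Prob big_mkcond; apply: eq_bigr => x _.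
by case: (E x); rewrite ?mulr1 ?mulr0.
Qed.

Lemma bweightD1 (R : comRingType) (S : finType) (p : R) (i : S) x :
  bweight p x = cw p (x i) * Wo p i x.
Proof. by rewrite /bweight (bigD1 i). Qed.

Lemma Wo_setf (R : comRingType) (S : finType) (p : R) (i : S) x b :
  Wo p i (setf x i b) = Wo p i x.
Proof.
apply: eq_bigr => j /negPf hj; by rewrite /setf ffunE hj.
Qed.

Lemma setfK (S : finType) (x : {ffun S -> bool}) i : setf x i (x i) = x.
Proof. by apply/ffunP => j; rewrite ffunE; case: eqP => // ->. Qed.

Lemma setf_setf (S : finType) (x : {ffun S -> bool}) i a b :
  setf (setf x i a) i b = setf x i b.
Proof. by apply/ffunP => j; rewrite !ffunE; case: eqP. Qed.

Lemma setf_at (S : finType) (x : {ffun S -> bool}) i b : setf x i b i = b.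
Proof. by rewrite ffunE eqxx. Qed.

Lemma resample (R : realFieldType) (I : finType) (p : R) (i : I)
  (F : {ffun I -> bool} -> R) :
  \sum_x bweight p x * F x =
  \sum_x bweight p x * (p * F (setf x i true) + (1 - p) * F (setf x i false)).
Proof.
pose fl x := setf x i (~~ x i).
have flK : involutive fl.
  by move=> x; rewrite /fl setf_setf setf_at negbK setfK.
have re : forall G : {ffun I -> bool} -> R, \sum_x G x = \sum_x G (fl x).
  by move=> G; rewrite (reindex_inj (inv_inj flK)).
set A := (X in X = _); set B := (X in _ = X).
suff : A + A = B + B by lra.
rewrite {2}/A {2}/B re [in X in _ = _ + X]re -!big_split /=.
apply: eq_bigr => x _.
rewrite /fl !(bweightD1 _ i) !Wo_setf !setf_setf !setf_at.
have -> : F x = F (setf x i (x i)) by rewrite setfK.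
rewrite -[in cw p (x i)](setf_at x i (x i)) -[in Wo p i x](Wo_setf p i x (x i)).
move: (x i) (Wo p i _) => a W.
by case: a; rewrite /cw !setf_at /=; ring.
Qed.

Definition phi (S T : finType) (psi : S -> T) (i1 i2 : S) (t : T) : S :=
  odflt i1 [pick s | (psi s == t) && (s != i2)].

Lemma phi_props (S T : finType) (psi : S -> T) (i1 i2 : S) (j0 : T) :
  i1 != i2 ->
  psi @^-1: [set j0] = [set i1; i2] ->
  (forall j : T, j != j0 -> #|psi @^-1: [set j]| = 1%N) ->
  [/\ psi i1 = j0, psi i2 = j0,
     forall t, psi (phi psi i1 i2 t) = t /\ phi psi i1 i2 t != i2 &
     forall s, s != i2 -> phi psi i1 i2 (psi s) = s].
Proof.
move=> H12 Hpre Hone.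
have P1 : psi i1 = j0.
  by have := set21 i1 i2; rewrite -Hpre inE => /set1P.
have P2 : psi i2 = j0.
  by have := set22 i1 i2; rewrite -Hpre inE => /set1P.
have Hs : forall t, psi (phi psi i1 i2 t) = t /\ phi psi i1 i2 t != i2.
  move=> t; rewrite /phi; case: pickP => [s /andP[/eqP hs h2] //|none].
  exfalso.
  have [e|ht] := eqVneq t j0.
    by have := none i1; rewrite P1 e eqxx H12.
  have /eqP/cards1P [s Hs] := Hone t ht.
  have : s \in psi @^-1: [set t] by rewrite Hs set11.
  rewrite inE => /set1P hs.
  have := none s; rewrite hs eqxx /=.
  move/negbFE/eqP => hs2; move: ht; by rewrite -hs hs2 P2 eqxx.
split=> // s hs.
have [h1 h2] := Hs (psi s).
have [e|ne] := eqVneq (psi s) j0.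
  have : s \in psi @^-1: [set j0] by rewrite inE e set11.
  have : phi psi i1 i2 (psi s) \in psi @^-1: [set j0] by rewrite inE h1 e set11.
  rewrite Hpre !inE (negPf hs) (negPf h2) !orbF => /eqP -> /eqP -> //.
have /eqP/cards1P [a Ha] := Hone _ ne.
have : s \in psi @^-1: [set psi s] by rewrite inE set11.
have : phi psi i1 i2 (psi s) \in psi @^-1: [set psi s] by rewrite inE h1 set11.
by rewrite Ha !inE => /eqP -> /eqP ->.
Qed.

Lemma marg (R : realFieldType) (p : R) (S T : finType) (psi : S -> T) (i1 i2 : S) (j0 : T)
  (G : {ffun T -> bool} -> R) :
  i1 != i2 ->
  psi @^-1: [set j0] = [set i1; i2] ->
  (forall j : T, j != j0 -> #|psi @^-1: [set j]| = 1%N) ->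
  \sum_y bweight p y * G y =
  \sum_x bweight p x * G [ffun t => x (phi psi i1 i2 t)].
Proof.
move=> H12 Hpre Hone.
have [P1 P2 Hs Hps] := phi_props H12 Hpre Hone.
pose h (yb : {ffun T -> bool} * bool) : {ffun S -> bool} :=
  [ffun s => if s == i2 then yb.2 else yb.1 (psi s)].
pose g (x : {ffun S -> bool}) := ([ffun t => x (phi psi i1 i2 t)], x i2).
have hb : bijective h.
  exists g.
    case=> y b; rewrite /g /h /=; congr pair; last by rewrite ffunE eqxx.
    apply/ffunP => t; rewrite !ffunE; have [e1 e2] := Hs t.
    by rewrite (negPf e2) e1.
  move=> x; apply/ffunP => s; rewrite /g /h !ffunE /=.
  by case: eqP => [->|/eqP ne] //; rewrite Hps.
rewrite (reindex h); last exact: onW_bij.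
rewrite [RHS](_ : _ = \sum_y \sum_b bweight p (h (y,b)) * G [ffun t => h (y, b) (phi psi i1 i2 t)]); last first.
  by rewrite pair_bigA; apply: eq_bigr => -[].
apply: eq_bigr => y _.
rewrite big_bool /=.
have -> : [ffun t => h (y, true) (phi psi i1 i2 t)] = y.
  apply/ffunP => t; rewrite !ffunE; have [e1 e2] := Hs t.
  by rewrite (negPf e2) e1.
have -> : [ffun t => h (y, false) (phi psi i1 i2 t)] = y.
  apply/ffunP => t; rewrite !ffunE; have [e1 e2] := Hs t.
  by rewrite (negPf e2) e1.
have Wy : forall b, Wo p i2 (h (y, b)) = bweight p y.
  move=> b; rewrite /Wo /bweight.
  rewrite (reindex (phi psi i1 i2)) /=; last first.
    exists psi.
      by move=> t _; have [] := Hs t.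
    by move=> s; rewrite inE => hs; rewrite Hps.
  have e : forall t, (phi psi i1 i2 t != i2) = true by move=> t; have [] := Hs t.
  rewrite (eq_bigl xpredT); last by move=> t; rewrite /= e.
  apply: eq_bigr => t _; rewrite ffunE; have [e1 e2] := Hs t.
  by rewrite (negPf e2) e1.
rewrite !(bweightD1 _ i2) !Wy !ffunE eqxx /cw /=; ring.
Qed.

Definition mkx (S : finType) (i1 i2 : S) (x : {ffun S -> bool}) (a b : bool) : {ffun S -> bool} :=
  [ffun i => if i == i1 then a else if i == i2 then b else x i].

Lemma eqf2E g f : eqf2 g f = [&& g false false == f false false, g false true == f false true,
   g true false == f true false & g true true == f true true].
Proof.
apply/forallP/and4P => [H|[h1 h2 h3 h4] [] /=].
- by split; [move/forallP: (H false) => /(_ false) | move/forallP: (H false) => /(_ true)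
            | move/forallP: (H true) => /(_ false) | move/forallP: (H true) => /(_ true)].
- by apply/forallP => -[].
- by apply/forallP => -[].
Qed.

Lemma pw (R : realFieldType) (p : R) (g : bool -> bool -> bool) :
  g false false ==> g false true -> g false false ==> g true false ->
  g false true ==> g true true -> g true false ==> g true true ->
  p * (p * ((g true true)%:R - (g true true)%:R) + (1 - p) * ((g false true)%:R - (g false false)%:R))
  + (1 - p) * (p * ((g true false)%:R - (g true true)%:R) + (1 - p) * ((g false false)%:R - (g false false)%:R))
  = p * (1 - p) * ((eqf2 g f_or)%:R - (eqf2 g f_and)%:R).
Proof.
rewrite !eqf2E /f_or /f_and /=.
case: (g false false); case: (g false true); case: (g true false); case: (g true true) => //= _ _ _ _; ring.
Qed.

Lemma setf2 (S : finType) (i1 i2 : S) x a b :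
  setf (setf x i2 b) i1 a = mkx i1 i2 x a b.
Proof. by apply/ffunP => j; rewrite !ffunE. Qed.

Lemma up_mkx (S : finType) (i1 i2 : S) x a b :
  setf (mkx i1 i2 x a b) i2 (mkx i1 i2 x a b i1) = mkx i1 i2 x a a.
Proof.
apply/ffunP => j; rewrite !ffunE eqxx.
by case: (j == i2); case: (j == i1).
Qed.

Theorem lemma6 (R : realFieldType) (S T : finType)
  (L : {ffun S -> bool} -> bool) (psi : S -> T) (p : R)
  (i1 i2 : S) (j0 : T) :
  monotone L ->
  (forall A : {set S}, minimal_one_set L A -> #|psi @: A| = #|A|) ->
  0 <= p -> p <= 1 ->
  i1 != i2 ->
  psi @^-1: [set j0] = [set i1; i2] ->
  (forall j : T, j != j0 -> #|psi @^-1: [set j]| = 1%N) ->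
  Prob p (fun x : {ffun S -> bool} => L x)
    - Prob p (fun y : {ffun T -> bool} => L (compf y psi))
  = p * (1 - p) *
    (Prob p (fun x : {ffun S -> bool} => eqf2 (Lres L i1 i2 x) f_or)
     - Prob p (fun x : {ffun S -> bool} => eqf2 (Lres L i1 i2 x) f_and)).
Proof.
move=> Hmon _ _ _ H12 Hpre Hone.
have [P1 P2 Hs Hps] := phi_props H12 Hpre Hone.
pose res (x : {ffun S -> bool}) : {ffun T -> bool} := [ffun t => x (phi psi i1 i2 t)].
have Hres : forall x, compf (res x) psi = setf x i2 (x i1).
  move=> x; apply/ffunP => s; rewrite !ffunE.
  have [->|ne] := eqVneq s i2; first by rewrite P2 -P1 Hps.
  by rewrite Hps.
rewrite !ProbE.
rewrite (marg p (fun y => ((L (compf y psi)) : nat)%:R) H12 Hpre Hone).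
pose F (x : {ffun S -> bool}) : R := ((L x) : nat)%:R - ((L (setf x i2 (x i1))) : nat)%:R.
have -> : \sum_x bweight p x * ((L x) : nat)%:R -
   \sum_x bweight p x * ((L (compf [ffun t => x (phi psi i1 i2 t)] psi)) : nat)%:R
   = \sum_x bweight p x * F x.
  rewrite -sumrB; apply: eq_bigr => x _; rewrite -mulrBr /F.
  by have := Hres x; rewrite /res => ->.
rewrite (resample p i1) (resample p i2) -sumrB mulr_sumr.
apply: eq_bigr => x _.
rewrite /F !setf2 !up_mkx.
have gm : forall a b a' b', a ==> a' -> b ==> b' -> Lres L i1 i2 x a b ==> Lres L i1 i2 x a' b'.
  move=> a b a' b' ha hb; apply: Hmon => i; rewrite !ffunE.
  by case: (i == i1) => //; case: (i == i2) => //; rewrite implybb.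
have E := pw p (gm false false false true isT isT) (gm false false true false isT isT) (gm false true true true isT isT) (gm true false true true isT isT).
rewrite -mulrBr mulrCA -E /Lres /mkx /=.
ring.
Qed.
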